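(* Let $\omega\in S_n$. The poset $M_\omega$ contains a parallelogram-pattern poset if and only if $\omega$ contains the pattern $3412$ or the pattern $3421$.
   Context: Permutations $\omega\in S_n$ are written in one-line notation. Let ${\rm Inv}(\omega)=\{(i,j): 1\le i<j\le n,\ \omega(i)>\omega(j)\}$, $c_i(\omega)=\#\{j: i<j\le n,\ \omega(i)>\omega(j)\}$, and for $i<j$, $c_{i,j}(\omega)=\#\{k: i<k<j,\ \omega(i)>\omega(k)\}$; $[m]=\{1,\dots,m\}$. For $i$ with $c_i(\omega)>0$ and $x\in[c_i(\omega)]$, $m_{i,x}(\omega)\in\mathbb{N}^n$ has $j$-th coordinate $0$ if $j<i$; $x$ if $j=i$; $0$ if $j>i$ and $(i,j)\in{\rm Inv}(\omega)$; $\max\{0,x-c_{i,j}(\omega)\}$ if $j>i$ and $(i,j)\notin{\rm Inv}(\omega)$. $M_\omega$ is the set of all such $m_{i,x}(\omega)$, ordered by the product order on $\mathbb{N}^n$. For $1\le i<j\le n$, $b<a$ in $[c_i(\omega)]$ and $c<d$ in $[c_j(\omega)]$ with $a+c=b+d$, the set $\{m_{i,a}(\omega),m_{i,b}(\omega),m_{j,c}(\omega),m_{j,d}(\omega)\}$ is a parallelogram-pattern poset if $m_{i,a}(\omega)>m_{j,d}(\omega)$, $m_{i,b}(\omega)>m_{j,c}(\omega)$, and $m_{i,b}(\omega)$, $m_{j,d}(\omega)$ are incomparable. $\omega$ contains the pattern $3412$ (resp. $3421$) if there exist $i<j<k<l$ with $\omega(k)<\omega(l)<\omega(i)<\omega(j)$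 (resp. $\omega(l)<\omega(k)<\omega(i)<\omega(j)$). *)

(* Defs.v *)
(* Positions 1..n of the paper are represented by 'I_n (0-based);
   all notions below depend only on the relative order of positions/values. *)
From mathcomp Require Import all_boot all_fingroup.
Set Implicit Arguments. Unset Strict Implicit. Unset Printing Implicit Defensive.

Section Defs.
Variable n : nat.
Implicit Types (w : 'S_n) (i j k : 'I_n).

Definition inv_pair w i j : bool := (i < j) && (w j < w i).

Definition c w i : nat := #|[set j : 'I_n | (i < j) && (w j < w i)]|.

Definition cij w i j : nat := #|[set k : 'I_n | [&& i < k, k < j & w k < w i]]|.

(* m_{i,x}(w) in N^n; truncated subtraction x - c_{i,j} = max{0, x - c_{i,j}} *)
Definition mvec w i (x : nat) : {ffun 'I_n -> nat} :=
  [ffun j : 'I_n =>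
     if j < i then 0
     else if j == i then x
     else if inv_pair w i j then 0
     else x - cij w i j].

Definition vle (u v : {ffun 'I_n -> nat}) : bool := [forall j, u j <= v j].
Definition vlt (u v : {ffun 'I_n -> nat}) : bool := (u != v) && vle u v.
Definition incomparable (u v : {ffun 'I_n -> nat}) : bool := ~~ vle u v && ~~ vle v u.

Definition has_parallelogram w : Prop :=
  exists (i j : 'I_n) (a b cc d : nat),
    [/\ i < j,
        0 < b /\ b < a /\ a <= c w i,
        0 < cc /\ cc < d /\ d <= c w j,
        a + cc = b + d &
        [/\ vlt (mvec w j d) (mvec w i a),
            vlt (mvec w j cc) (mvec w i b) &
            incomparable (mvec w i b) (mvec w j d)]].

Definition contains3412 w : Prop :=
  exists i j k l : 'I_n, [/\ i < j, j < k, k < l & [/\ w k < w l, w l < w i & w i < w j]].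

Definition contains3421 w : Prop :=
  exists i j k l : 'I_n, [/\ i < j, j < k, k < l & [/\ w l < w k, w k < w i & w i < w j]].

End Defs.

(* Main.v *)
Require Import Defs.
From mathcomp Require Import all_boot all_fingroup.
From mathcomp Require Import zify.

Section Aux.
Variable n : nat.
Variable w : 'S_n.

Lemma ord_ltn (a b : 'I_n) : a <= b -> b != a -> a < b.
Proof.
move=> h hne; rewrite ltn_neqAle h andbT; apply/eqP => E.
by move: hne; rewrite (val_inj E) eqxx.
Qed.

Lemma mvec_lt (i k : 'I_n) x : k < i -> mvec w i x k = 0.
Proof. by move=> h; rewrite /mvec ffunE h. Qed.

Lemma mvec_eq (i : 'I_n) x : mvec w i x i = x.
Proof. by rewrite /mvec ffunE ltnn eqxx. Qed.

Lemma mvec_gt (i k : 'I_n) x : i < k ->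
  mvec w i x k = if Defs.inv_pair w i k then 0 else x - cij w i k.
Proof.
move=> h; rewrite /mvec ffunE ltnNge (ltnW h) /=.
have -> : (k == i) = false by apply/negbTE; rewrite -val_eqE /= gtn_eqF.
by [].
Qed.

Lemma wneq (i j : 'I_n) : i != j -> (w i : nat) != w j.
Proof. by move=> h; apply/eqP => /val_inj/perm_inj E; rewrite E eqxx in h. Qed.

Lemma cij_tri (i j k : 'I_n) : i < j -> w i < w j ->
  cij w i k <= cij w i j + cij w j k.
Proof.
move=> hij hw; rewrite /cij.
set A := [set _ | _]; set B := [set _ | _]; set C := [set _ | _].
have : #|A| <= #|B :|: C|.
  apply: subset_leq_card; apply/subsetP => m; rewrite /A /B /C !inE => /and3P [h1 h2 h3].
  case: (ltnP m j) => hmj; first by rewrite h1 h3.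
  case: (eqVneq m j) => [E|hne].
    by move: h3; rewrite E ltnNge (ltnW hw).
  have hjm : j < m by apply: ord_ltn.
  by rewrite hjm h2 (ltn_trans h3 hw) orbT.
rewrite cardsU; lia.
Qed.

Lemma vle_suff (i j : 'I_n) d x : i < j -> w i < w j -> d <= x - cij w i j ->
  vle (mvec w j d) (mvec w i x).
Proof.
move=> hij hw hd; apply/forallP => k.
case: (ltnP k j) => hkj; first by rewrite mvec_lt.
case: (eqVneq k j) => [->|hne].
  by rewrite mvec_eq mvec_gt // /Defs.inv_pair hij /= ltnNge (ltnW hw) /=.
have hjk : j < k by apply: ord_ltn.
rewrite (@mvec_gt j k _ hjk) (@mvec_gt i k _ (ltn_trans hij hjk)).
case: ifP => // hjkinv.
have -> : Defs.inv_pair w i k = false.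
  move: hjkinv; rewrite /Defs.inv_pair (ltn_trans hij hjk) hjk /= => /negbT.
  rewrite -leqNgt => h; apply/negbTE; rewrite -leqNgt.
  exact: leq_trans (ltnW hw) h.
have := @cij_tri i j k hij hw; lia.
Qed.

Lemma vle_nec (i j : 'I_n) d x : i < j -> 0 < d ->
  vle (mvec w j d) (mvec w i x) -> w i < w j /\ d <= x - cij w i j.
Proof.
move=> hij hd /forallP /(_ j); rewrite mvec_eq mvec_gt //.
rewrite /Defs.inv_pair hij /=; case: ifP => h; first by rewrite leqNgt hd.
move=> hdx; split => //.
rewrite ltn_neqAle leqNgt h andbT; apply: wneq.
by rewrite -val_eqE /= ltn_eqF.
Qed.

Lemma two_after (i j : 'I_n) : i < j -> w i < w j -> cij w i j + 2 <= c w i ->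
  exists k l : 'I_n, [/\ j < k, k < l, w k < w i & w l < w i].
Proof.
move=> hij hw; rewrite /c /cij.
set T := [set _ | _]; set S := [set _ | _] => hc.
have hTS : T \subset S.
  by apply/subsetP => m; rewrite /S /T !inE => /and3P[-> _ ->].
have : 1 < #|S :\: T|.
  have := cardsID T S; rewrite (setIidPr hTS); lia.
have inD : forall x, x \in S :\: T -> j < x /\ w x < w i.
  move=> x; rewrite /S /T !inE => /andP [hn /andP [h1 h2]].
  move: hn; rewrite h1 h2 andbT /= -leqNgt => hjx; split => //.
  rewrite ltn_neqAle hjx andbT; apply/eqP => E.
  have E' : j = x by apply: val_inj.
  by move: h2; rewrite -E' ltnNge (ltnW hw).
case/card_gt1P => x [y [hx hy hxy]].
have [hjx hwx] := inD x hx; have [hjy hwy] := inD y hy.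
case: (ltngtP x y) => hc'.
- by exists x, y.
- by exists y, x.
- by move: hxy; rewrite -val_eqE /= hc' eqxx.
Qed.

Lemma from_pattern (i j k l : 'I_n) : i < j -> j < k -> k < l ->
  w k < w i -> w l < w i -> w i < w j -> has_parallelogram w.
Proof.
move=> hij hjk hkl hki hli hij'.
have hkl' : k != l by rewrite -val_eqE /= ltn_eqF.
have hci : cij w i j + 2 <= c w i.
  rewrite /c /cij; set T := [set _ | _]; set S := [set _ | _].
  have hTS : T \subset S.
    by apply/subsetP => m; rewrite /S /T !inE => /and3P[-> _ ->].
  have h2 : [set k; l] \subset S :\: T.
    apply/subsetP => m; rewrite /S /T !inE => /orP [] /eqP ->.
    - by rewrite (ltn_trans hij hjk) hki !andbT /= -leqNgt ltnW.
    - by rewrite (ltn_trans hij (ltn_trans hjk hkl)) hli !andbT /= -leqNgt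
          ltnW // (ltn_trans hjk hkl).
  have := subset_leq_card h2; rewrite cards2 hkl'.
  have := cardsID T S; rewrite (setIidPr hTS); lia.
have hcj : 2 <= c w j.
  rewrite /c; set S := [set _ | _].
  have h2 : [set k; l] \subset S.
    apply/subsetP => m; rewrite /S !inE => /orP [] /eqP ->.
    - by rewrite hjk (ltn_trans hki hij').
    - by rewrite (ltn_trans hjk hkl) (ltn_trans hli hij').
  by have := subset_leq_card h2; rewrite cards2 hkl'.
exists i, j, (cij w i j + 2), (cij w i j + 1), 1, 2.
split => //; try lia.
split.
- apply/andP; split.
    apply/eqP => /(congr1 (fun f : {ffun 'I_n -> nat} => f i)).
    by rewrite mvec_lt // mvec_eq; lia.
  by apply: vle_suff => //; lia.
- apply/andP; split.
    apply/eqP => /(congr1 (fun f : {ffun 'I_n -> nat} => f i)).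
    by rewrite mvec_lt // mvec_eq; lia.
  by apply: vle_suff => //; lia.
- apply/andP; split.
    apply/negP => /forallP /(_ i); rewrite mvec_eq mvec_lt //; lia.
  apply/negP => /forallP /(_ j); rewrite mvec_eq mvec_gt //.
  by rewrite /Defs.inv_pair hij /= (ltnNge (w j)) (ltnW hij') /=; lia.
Qed.

End Aux.

Theorem mainTheorem8 (n : nat) (w : 'S_n) :
  has_parallelogram w <-> contains3412 w \/ contains3421 w.
Proof.
split.
- move=> [i [j [a [b [cc [d [hij [hb [hba hac]] [hc [hcd hdc]] heq [h1 h2 h3]]]]]]]].
  move: h2 => /andP [_ h2].
  have [hw hle] := @vle_nec n w i j cc b hij hc h2.
  have hci : cij w i j + 2 <= c w i by lia.
  have [k [l [hjk hkl hki hli]]] := @two_after n w i j hij hw hci.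
  case: (ltngtP (w k) (w l)) => hwkl.
  + by left; exists i, j, k, l.
  + by right; exists i, j, k, l.
  + have : k != l by rewrite -val_eqE /= ltn_eqF.
    by move/(@wneq n w k l); rewrite hwkl eqxx.
- case=> [[i [j [k [l [hij hjk hkl [h1 h2 h3]]]]]]|[i [j [k [l [hij hjk hkl [h1 h2 h3]]]]]]].
  + exact: (@from_pattern n w i j k l hij hjk hkl (ltn_trans h1 h2) h2 h3).
  + exact: (@from_pattern n w i j k l hij hjk hkl h2 (ltn_trans h1 h2) h3).
Qed.
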